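(* Let $h$ be a fixed-point-free isometry of order $3$ of the $E_8$ root lattice. In $E_8\perp E_8$ let $M=\{(x,x):x\in E_8\}$ and $M'=\{(hx,x):x\in E_8\}$. Then $M+M'$ is isometric to $A_2\otimes_{\mathbb Z}E_8$.
   Context: $A_2\otimes E_8$ denotes the tensor product of the root lattices $A_2$ and $E_8$ with the product bilinear form. *)

(* Defs.v *)
From HB Require Import structures.
From mathcomp Require Import all_boot all_order all_algebra.
Set Implicit Arguments. Unset Strict Implicit. Unset Printing Implicit Defensive.
Import Order.TTheory GRing.Theory Num.Theory.
Local Open Scope ring_scope.

(* Gram matrix of the E8 root lattice (Cartan matrix, Bourbaki labelling,
   0-indexed): nodes 0..7, edges 0-2, 2-3, 3-4, 4-5, 5-6, 6-7, 1-3.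
   The E8 root lattice is modelled as Z^8 = 'rV[int]_8 with this Gram matrix. *)
Definition e8_edge (i j : nat) : bool :=
  [|| (i == 0%N) && (j == 2%N), (i == 2%N) && (j == 3%N),
      (i == 3%N) && (j == 4%N), (i == 4%N) && (j == 5%N),
      (i == 5%N) && (j == 6%N), (i == 6%N) && (j == 7%N)
    | (i == 1%N) && (j == 3%N)].

Definition E8gram : 'M[int]_8 :=
  \matrix_(i, j) (if i == j then (2 : int)
                  else if e8_edge i j || e8_edge j i then (-1 : int) else (0 : int)).

Definition A2gram : 'M[int]_2 :=
  \matrix_(i, j) (if i == j then (2 : int) else (-1 : int)).

Definition e8form (x y : 'rV[int]_8) : int := (x *m E8gram *m y^T) 0 0.

Definition e8e8form (u v : 'rV[int]_8 * 'rV[int]_8) : int :=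
  e8form u.1 v.1 + e8form u.2 v.2.

(* A2 (x)_Z E8 = Z^2 (x) Z^8, modelled as 2x8 integer matrices X
   (X = sum_{i,j} X i j e_i (x) f_j), with the product bilinear form
   <X, Y> = sum_{i,k,j,l} X i j * Y k l * A2gram i k * E8gram j l
          = tr (X^T A2 Y E8^T). *)
Definition a2e8form (X Y : 'M[int]_(2, 8)) : int :=
  \tr (X^T *m A2gram *m Y *m E8gram^T).

Definition isometric (V W : zmodType)
  (L1 : V -> Prop) (b1 : V -> V -> int) (L2 : W -> Prop) (b2 : W -> W -> int) :=
  exists f : V -> W,
    [/\ (forall x y, L1 x -> L1 y -> f (x + y) = f x + f y),
        (forall x, L1 x -> L2 (f x)),
        (forall x y, L1 x -> L1 y -> f x = f y -> x = y),
        (forall z, L2 z -> exists x, L1 x /\ f x = z)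
      & (forall x y, L1 x -> L1 y -> b2 (f x) (f y) = b1 x y)].

(* M = {(x,x)}, M' = {(hx,x)} (h acting on row vectors: hx := x *m h) *)
Definition diagM (u : 'rV[int]_8 * 'rV[int]_8) : Prop := exists x, u = (x, x).
Definition twistM (h : 'M[int]_8) (u : 'rV[int]_8 * 'rV[int]_8) : Prop :=
  exists x, u = (x *m h, x).
Definition sumL (V : zmodType) (L1 L2 : V -> Prop) (v : V) : Prop :=
  exists a b, L1 a /\ L2 b /\ v = a + b.

(* Main.v *)
Set Warnings "-notation-overridden -ambiguous-paths".
Require Import Defs.
From HB Require Import structures.
From mathcomp Require Import all_boot all_order all_algebra.
From mathcomp Require Import ring lra zify.
Import Order.TTheory GRing.Theory Num.Theory.
Local Open Scope ring_scope.

Lemma eDl (u v w : 'rV[int]_8) : e8form (u + v) w = e8form u w + e8form v w.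
Proof. by rewrite /e8form !mulmxDl mxE. Qed.
Lemma eDr (u v w : 'rV[int]_8) : e8form w (u + v) = e8form w u + e8form w v.
Proof. by rewrite /e8form linearD /= mulmxDr mxE. Qed.
Lemma eNl (u w : 'rV[int]_8) : e8form (- u) w = - e8form u w.
Proof. by rewrite /e8form !mulNmx mxE. Qed.
Lemma eNr (u w : 'rV[int]_8) : e8form w (- u) = - e8form w u.
Proof. by rewrite /e8form linearN /= mulmxN mxE. Qed.

Lemma e_entry (X Y : 'M[int]_(2,8)) i k :
  e8form (row i X) (row k Y) = (X *m E8gram *m Y^T) i k.
Proof.
rewrite /e8form tr_row -!row_mul.
rewrite !mxE; apply: eq_bigr => j _; rewrite !mxE.
by [].
Qed.

Lemma a2E (X Y : 'M[int]_(2,8)) :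
  a2e8form X Y = 2 * e8form (row ord0 X) (row ord0 Y)
    - e8form (row ord0 X) (row (lift ord0 ord0) Y)
    - e8form (row (lift ord0 ord0) X) (row ord0 Y)
    + 2 * e8form (row (lift ord0 ord0) X) (row (lift ord0 ord0) Y).
Proof.
rewrite !e_entry /a2e8form.
have -> : X^T *m A2gram *m Y *m E8gram^T = X^T *m (A2gram *m (Y *m E8gram^T)).
  by rewrite !mulmxA.
rewrite mxtrace_mulC.
set G := (X *m E8gram *m Y^T).
have -> : A2gram *m (Y *m E8gram^T) *m X^T = A2gram *m G^T.
  by rewrite /G !trmx_mul !trmxK !mulmxA.
clearbody G.
rewrite /mxtrace !big_ord_recl big_ord0 !mxE !big_ord_recl !big_ord0 !mxE /=.
ring.
Qed.

Definition yof (h : 'M[int]_8) (p : 'rV[int]_8 * 'rV[int]_8) : 'rV[int]_8 :=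
  \row_j (- divz (((p.1 - p.2) *m h + (p.1 - p.2) *+ 2) 0 j) 3).
Definition fmap (h : 'M[int]_8) (p : 'rV[int]_8 * 'rV[int]_8) : 'M[int]_(2,8) :=
  col_mx (p.2 - yof h p) (yof h p *m h *m h).

Lemma row0_col (u v : 'rV[int]_8) : row ord0 (col_mx u v : 'M_(2,8)) = u.
Proof.
apply/rowP => j; rewrite !mxE; case: splitP => k /= Hk.
  by rewrite (ord1 k).
by move: (ltn_ord k) Hk; lia.
Qed.
Lemma row1_col (u v : 'rV[int]_8) : row (lift ord0 ord0) (col_mx u v : 'M_(2,8)) = v.
Proof.
apply/rowP => j; rewrite !mxE; case: splitP => k /= Hk.
  by move: (ltn_ord k) Hk; rewrite /bump /=; lia.
by rewrite (ord1 k).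
Qed.

Lemma yofE (h : 'M[int]_8) (H1 : forall x : 'rV[int]_8, x *m h *m h = - x - x *m h) (x y : 'rV[int]_8) : yof h (x + y *m h, x + y) = y.
Proof.
rewrite /yof /=.
have -> : (x + y *m h - (x + y)) *m h + (x + y *m h - (x + y)) *+ 2 = - (y *+ 3).
  rewrite (_ : x + y *m h - (x + y) = y *m h - y); last first.
    by rewrite opprD addrACA subrr add0r.
  rewrite mulmxBl H1; move: (y *m h) => z.
  by apply/rowP => j; rewrite !mxE; ring.
apply/rowP => j; rewrite !mxE.
have -> : - (y 0 j *+ 3) = (- y 0 j) * 3 by ring.
by rewrite mulzK // opprK.
Qed.

Lemma fmapE (h : 'M[int]_8) (H1 : forall x : 'rV[int]_8, x *m h *m h = - x - x *m h) (x y : 'rV[int]_8) : fmap h (x + y *m h, x + y) = col_mx x (y *m h *m h).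
Proof. by rewrite /fmap (@yofE h H1) /= addrK. Qed.

Lemma pairE (x y : 'rV[int]_8) (h : 'M[int]_8) :
  (x, x) + (y *m h, y) = (x + y *m h, x + y).
Proof. by []. Qed.

Theorem lemma2p7 (h : 'M[int]_8) :
  (forall x y : 'rV[int]_8, e8form (x *m h) (y *m h) = e8form x y) ->
  h ^+ 3 = 1 -> h != 1 ->
  (forall x : 'rV[int]_8, x *m h = x -> x = 0) ->
  isometric (sumL diagM (twistM h)) e8e8form (fun _ : 'M[int]_(2, 8) => True) a2e8form.
Proof.
move=> Hiso H3 _ Hfix.
have H3' : forall x : 'rV[int]_8, x *m h *m h *m h = x.
  move=> x; have : x *m h ^+ 3 = x by rewrite H3 mulmx1.
  by rewrite !exprS expr0 mulr1 !mulmxA.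
have H1 : forall x : 'rV[int]_8, x *m h *m h = - x - x *m h.
  move=> x; have /Hfix : (x + x *m h + x *m h *m h) *m h = x + x *m h + x *m h *m h.
    by rewrite !mulmxDl H3' addrC addrA.
  by move/eqP; rewrite addrC addr_eq0 opprD => /eqP.
exists (fmap h); split.
- move=> p q [a [b [[x ->] [[y ->] ->]]]] [a' [b' [[x' ->] [[y' ->] ->]]]].
  rewrite !pairE.
  have -> : (x + y *m h, x + y) + (x' + y' *m h, x' + y')
           = ((x + x') + (y + y') *m h, (x + x') + (y + y')).
    by rewrite mulmxDl; congr pair; rewrite addrACA.
  rewrite !(@fmapE h H1) !mulmxDl; symmetry; exact: (@add_col_mx _ 1 1 8).
- by [].
- move=> p q [a [b [[x ->] [[y ->] ->]]]] [a' [b' [[x' ->] [[y' ->] ->]]]].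
  rewrite !pairE !(@fmapE h H1) => /(@eq_col_mx _ 1 1 8) [-> Hy].
  have -> : y = y' by rewrite -(H3' y) -(H3' y') Hy.
  by [].
- move=> Z _.
  exists ((usubmx (Z : 'M_(1+1,8)), usubmx (Z : 'M_(1+1,8)))
          + (dsubmx (Z : 'M_(1+1,8)) *m h *m h, dsubmx (Z : 'M_(1+1,8)) *m h)).
  split.
    by do 2 eexists; split; [exists (usubmx (Z : 'M_(1+1,8))) | split; [exists (dsubmx (Z : 'M_(1+1,8)) *m h) |]].
  by rewrite pairE (@fmapE h H1) H3' vsubmxK.
- move=> p q [a [b [[x ->] [[y ->] ->]]]] [a' [b' [[x' ->] [[y' ->] ->]]]].
  rewrite !pairE !(@fmapE h H1) a2E !row0_col !row1_col /e8e8form /=.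
  rewrite !Hiso !H1 !eDl !eDr !eNl !eNr !Hiso.
  ring.
Qed.
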